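(* Let $g:[0,1)\to\mathbb{R}$ be the function defined in the context, and let $g'(0)$ denote its right derivative at $0$. If $C'(0)<Py_H-Py_L$, then $g'(0)>0$ (and consequently every maximizer $a^*$ of $g$ on $[0,1)$ satisfies $a^*>0$). Further, if $0\le\beta\le u$, then $g'(0)>0$ holds only if $C'(0)<Py_H-Py_L$.
   Context: Fix $P>0$, $y_H>y_L\ge 0$, a real number $u$ and $\gamma\in(0,1]$. Let $C:[0,1)\to\mathbb{R}$ satisfy $C(0)=0$, $C$ increasing, strictly convex, twice differentiable, $C(a)\to\infty$ as $a\to1$. Let $\eta:[0,\infty)\to\mathbb{R}$ be strictly convex, increasing, twice differentiable with $\eta(0)=0$, and let $\beta\ge0$ satisfy $\gamma\eta'(\beta)=1$ (assumed to exist). For $a\in[0,1)$ define $w_L^*(a)=\max\{0,u-aC'(a)+C(a)\}$, $w_H^*(a)=w_L^*(a)+C'(a)$, $b_i^*(a)=\min\{\beta,w_i^*(a)\}$ for $i\in\{H,L\}$, and $g(a)=a\,(Py_H-w_H^*(a)+b_H^*(a)-\gamma\eta(b_H^*(a)))+(1-a)\,(Py_L-w_L^*(a)+b_L^*(a)-\gamma\eta(b_L^*(a)))$. (These are the optimal wages and thefts inducing effort $a$ in the one-shot wage-theft principal–agent problem, and $g(a)$ is the employer's resulting profit.) *)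

(* Defs.v *)
From Stdlib Require Import Reals Lra.
Open Scope R_scope.

Definition I01 (a : R) : Prop := 0 <= a /\ a < 1.
Definition Ipos (x : R) : Prop := 0 <= x.

Definition deriv_within (D : R -> Prop) (f : R -> R) (x l : R) : Prop :=
  forall eps, 0 < eps -> exists delta, 0 < delta /\
    forall y, D y -> Rabs (y - x) < delta ->
      Rabs (f y - f x - l * (y - x)) <= eps * Rabs (y - x).

Definition right_deriv (f : R -> R) (x l : R) : Prop :=
  forall eps, 0 < eps -> exists delta, 0 < delta /\
    forall h, 0 < h -> h < delta -> Rabs ((f (x + h) - f x) / h - l) <= eps.

Definition strictly_increasing_on (D : R -> Prop) (f : R -> R) : Prop :=
  forall x y, D x -> D y -> x < y -> f x < f y.

Definition strictly_convex_on (D : R -> Prop) (f : R -> R) : Prop :=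
  forall x y t, D x -> D y -> x <> y -> 0 < t -> t < 1 ->
    f (t * x + (1 - t) * y) < t * f x + (1 - t) * f y.

Definition tends_to_infty_at_1 (f : R -> R) : Prop :=
  forall M, exists delta, 0 < delta /\
    forall a, 1 - delta < a -> a < 1 -> M < f a.

(* Optimal wages and thefts; Cp plays the role of C'. *)
Definition wL (u : R) (C Cp : R -> R) (a : R) : R :=
  Rmax 0 (u - a * Cp a + C a).
Definition wH (u : R) (C Cp : R -> R) (a : R) : R :=
  wL u C Cp a + Cp a.
Definition bstar (beta w : R) : R := Rmin beta w.

Definition gfun (P yH yL u gamma beta : R) (C Cp eta : R -> R) (a : R) : R :=
  let wh := wH u C Cp a in
  let wl := wL u C Cp a in
  let bh := bstar beta wh in
  let bl := bstar beta wl in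
  a * (P * yH - wh + bh - gamma * eta bh)
  + (1 - a) * (P * yL - wl + bl - gamma * eta bl).

(* Main.v *)
Require Import Defs.
From Stdlib Require Import Reals Lra Psatz.
Open Scope R_scope.

Definition so (f : R -> R) := forall eps, 0 < eps -> exists delta, 0 < delta /\
  forall h, 0 < h -> h < delta -> Rabs (f h) <= eps * h.
Definition t0 (f : R -> R) := forall eps, 0 < eps -> exists delta, 0 < delta /\
  forall h, 0 < h -> h < delta -> Rabs (f h) <= eps.

Lemma abs_le x e : Rabs x <= e -> -e <= x <= e.
Proof. unfold Rabs; destruct Rcase_abs; lra. Qed.
Lemma le_abs x e : -e <= x <= e -> Rabs x <= e.
Proof. unfold Rabs; destruct Rcase_abs; lra. Qed.

Lemma so_ext f g : (forall h, f h = g h) -> so f -> so g.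
Proof. intros E H e he; destruct (H e he) as [d [hd Hd]]; exists d; split; auto;
  intros; rewrite <- E; auto. Qed.
Lemma t0_ext f g : (forall h, f h = g h) -> t0 f -> t0 g.
Proof. intros E H e he; destruct (H e he) as [d [hd Hd]]; exists d; split; auto;
  intros; rewrite <- E; auto. Qed.

Lemma so_plus f g : so f -> so g -> so (fun h => f h + g h).
Proof.
  intros Hf Hg e he.
  destruct (Hf (e/2)) as [d1 [h1 H1]]; [lra|].
  destruct (Hg (e/2)) as [d2 [h2 H2]]; [lra|].
  exists (Rmin d1 d2); split; [apply Rmin_pos; lra|].
  intros h hp hd. pose proof (Rmin_l d1 d2); pose proof (Rmin_r d1 d2).
  specialize (H1 h hp ltac:(lra)); specialize (H2 h hp ltac:(lra)).
  apply abs_le in H1; apply abs_le in H2; apply le_abs; lra.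
Qed.
Lemma t0_plus f g : t0 f -> t0 g -> t0 (fun h => f h + g h).
Proof.
  intros Hf Hg e he.
  destruct (Hf (e/2)) as [d1 [h1 H1]]; [lra|].
  destruct (Hg (e/2)) as [d2 [h2 H2]]; [lra|].
  exists (Rmin d1 d2); split; [apply Rmin_pos; lra|].
  intros h hp hd. pose proof (Rmin_l d1 d2); pose proof (Rmin_r d1 d2).
  specialize (H1 h hp ltac:(lra)); specialize (H2 h hp ltac:(lra)).
  apply abs_le in H1; apply abs_le in H2; apply le_abs; lra.
Qed.
Lemma so_opp f : so f -> so (fun h => - f h).
Proof. intros H e he; destruct (H e he) as [d [hd Hd]]; exists d; split; auto;
  intros; rewrite Rabs_Ropp; auto. Qed.
Lemma t0_opp f : t0 f -> t0 (fun h => - f h).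
Proof. intros H e he; destruct (H e he) as [d [hd Hd]]; exists d; split; auto;
  intros; rewrite Rabs_Ropp; auto. Qed.

Lemma so_mul_t0 f : t0 f -> so (fun h => h * f h).
Proof. intros H e he; destruct (H e he) as [d [hd Hd]]; exists d; split; auto.
  intros h hp hdd. rewrite Rabs_mult, (Rabs_pos_eq h) by lra.
  specialize (Hd h hp hdd). nra. Qed.

Lemma so_t0 f : so f -> t0 f.
Proof. intros H e he; destruct (H 1) as [d [hd Hd]]; [lra|].
  exists (Rmin d e); split; [apply Rmin_pos; lra|].
  intros h hp hdd. pose proof (Rmin_l d e); pose proof (Rmin_r d e).
  specialize (Hd h hp ltac:(lra)). lra. Qed.

Lemma so_le f g : so f -> (forall h, 0 < h -> Rabs (g h) <= Rabs (f h)) -> so g.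
Proof. intros H L e he; destruct (H e he) as [d [hd Hd]]; exists d; split; auto.
  intros h hp hdd. specialize (L h hp). specialize (Hd h hp hdd). lra. Qed.

Lemma deriv_so f l : deriv_within I01 f 0 l -> so (fun h => f h - f 0 - l * h).
Proof.
  intros H e he. destruct (H e he) as [d [hd Hd]].
  exists (Rmin d 1); split; [apply Rmin_pos; lra|].
  intros h hp hdd. pose proof (Rmin_l d 1); pose proof (Rmin_r d 1).
  assert (E : h - 0 = h) by ring.
  specialize (Hd h ltac:(unfold I01; lra)). rewrite E, Rabs_pos_eq in Hd by lra.
  apply Hd; lra.
Qed.

Lemma deriv_t0 f l : deriv_within I01 f 0 l -> t0 (fun h => f h - f 0).
Proof.
  intros H. pose proof (so_t0 _ (deriv_so _ _ H)) as H'.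
  assert (t0 (fun h => l * h)).
  { intros e he. exists (e / (Rabs l + 1)). split.
    - apply Rdiv_lt_0_compat; [lra| pose proof (Rabs_pos l); lra].
    - intros h hp hd. rewrite Rabs_mult, (Rabs_pos_eq h) by lra.
      pose proof (Rabs_pos l).
      apply Rmult_lt_compat_l with (r := Rabs l + 1) in hd; [|lra].
      replace ((Rabs l + 1) * (e / (Rabs l + 1))) with e in hd by (field; lra).
      nra. }
  eapply t0_ext; [| apply (t0_plus _ _ H' H0)]. intros; simpl; ring.
Qed.

Lemma so_rd g D : so (fun h => g h - g 0 - D * h) -> right_deriv g 0 D.
Proof.
  intros H e he. destruct (H e he) as [d [hd Hd]]. exists d; split; auto.
  intros h hp hdd. specialize (Hd h hp hdd).
  replace (0 + h) with h by ring.
  replace ((g h - g 0) / h - D) with ((g h - g 0 - D * h) / h) by (field; lra).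
  unfold Rdiv. rewrite Rabs_mult, Rabs_inv, (Rabs_pos_eq h) by lra.
  apply Rmult_le_reg_r with h; [lra|].
  rewrite Rmult_assoc, Rinv_l by lra. lra.
Qed.

Definition LipAt (F : R -> R) (w0 : R) := exists K d, 0 < K /\ 0 < d /\
  forall w, 0 <= w -> Rabs (w - w0) < d -> Rabs (F w - F w0) <= K * Rabs (w - w0).

Lemma comp_t0 F w0 x : LipAt F w0 -> (forall h, 0 < h -> h < 1 -> 0 <= x h) ->
  t0 (fun h => x h - w0) -> t0 (fun h => F (x h) - F w0).
Proof.
  intros [K [d [hK [hd HL]]]] Hx Ht e he.
  destruct (Ht (Rmin (d/2) (e/K))) as [d1 [h1 H1]].
  { apply Rmin_pos; [lra| apply Rdiv_lt_0_compat; lra]. }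
  exists (Rmin d1 1); split; [apply Rmin_pos; lra|]. intros h hp hdd.
  pose proof (Rmin_l d1 1); pose proof (Rmin_r d1 1).
  specialize (H1 h hp ltac:(lra)).
  pose proof (Rmin_l (d/2) (e/K)); pose proof (Rmin_r (d/2) (e/K)).
  eapply Rle_trans; [apply HL; [apply Hx; lra| lra]|].
  apply Rle_trans with (K * (e / K)); [apply Rmult_le_compat_l; lra|].
  right; field; lra.
Qed.

Lemma comp_so F w0 x : LipAt F w0 -> (forall h, 0 < h -> h < 1 -> 0 <= x h) ->
  t0 (fun h => x h - w0) -> so (fun h => x h - w0) -> so (fun h => F (x h) - F w0).
Proof.
  intros [K [d [hK [hd HL]]]] Hx Ht Hs e he.
  destruct (Ht (d/2)) as [d1 [h1 H1]]; [lra|].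
  destruct (Hs (e/K)) as [d2 [h2 H2]]; [apply Rdiv_lt_0_compat; lra|].
  exists (Rmin (Rmin d1 d2) 1); split; [apply Rmin_pos; [apply Rmin_pos|]; lra|].
  intros h hp hdd. pose proof (Rmin_l d1 d2); pose proof (Rmin_r d1 d2).
  pose proof (Rmin_l (Rmin d1 d2) 1); pose proof (Rmin_r (Rmin d1 d2) 1).
  specialize (H1 h hp ltac:(lra)). specialize (H2 h hp ltac:(lra)).
  eapply Rle_trans; [apply HL; [apply Hx; lra| lra]|].
  apply Rle_trans with (K * (e / K * h)); [apply Rmult_le_compat_l; lra|].
  right; field; lra.
Qed.

Lemma rmax_lip a b : Rabs (Rmax 0 a - Rmax 0 b) <= Rabs (a - b).
Proof. unfold Rmax; repeat destruct Rle_dec; unfold Rabs; repeat destruct Rcase_abs; lra. Qed.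
Lemma rmin_lip c a b : Rabs (Rmin c a - Rmin c b) <= Rabs (a - b).
Proof. unfold Rmin; repeat destruct Rle_dec; unfold Rabs; repeat destruct Rcase_abs; lra. Qed.
Lemma abs3 a b c : Rabs (a - b + c) <= Rabs a + Rabs b + Rabs c.
Proof. unfold Rabs; repeat destruct Rcase_abs; lra. Qed.

Definition Ff (gamma beta : R) (eta : R -> R) (w : R) :=
  w - bstar beta w + gamma * eta (bstar beta w).

Lemma Ff_lip gamma beta eta etap w0 : 0 <= beta -> 0 < gamma ->
  (forall x, Ipos x -> deriv_within Ipos eta x (etap x)) -> 0 <= w0 ->
  LipAt (Ff gamma beta eta) w0.
Proof.
  intros hb hg Hd hw.
  set (x0 := Rmin beta w0).
  assert (hx0 : 0 <= x0) by (unfold x0, Rmin; destruct Rle_dec; lra).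
  destruct (Hd x0 hx0 1) as [d [hd H]]; [lra|].
  exists (2 + gamma * (Rabs (etap x0) + 1)), d.
  pose proof (Rabs_pos (etap x0)).
  split; [nra|]. split; auto.
  intros w hw' hwd. unfold Ff, bstar. fold x0.
  set (x := Rmin beta w).
  assert (hx : 0 <= x) by (unfold x, Rmin; destruct Rle_dec; lra).
  assert (hxx : Rabs (x - x0) <= Rabs (w - w0)) by apply rmin_lip.
  specialize (H x hx ltac:(lra)).
  assert (He : Rabs (eta x - eta x0) <= (Rabs (etap x0) + 1) * Rabs (w - w0)).
  { replace (eta x - eta x0) with ((eta x - eta x0 - etap x0 * (x - x0)) + etap x0 * (x - x0)) by ring.
    eapply Rle_trans; [apply Rabs_triang|]. rewrite Rabs_mult.
    pose proof (Rabs_pos (x - x0)). nra. }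
  replace (w - x + gamma * eta x - (w0 - x0 + gamma * eta x0)) with
    ((w - w0) - (x - x0) + gamma * (eta x - eta x0)) by ring.
  eapply Rle_trans; [apply abs3|]. rewrite Rabs_mult, (Rabs_pos_eq gamma) by lra.
  pose proof (Rabs_pos (w - w0)). nra.
Qed.

Lemma three eta x y z : strictly_convex_on Ipos eta -> 0 <= x -> x < y -> y < z ->
  (eta y - eta x) * (z - y) <= (eta z - eta y) * (y - x).
Proof.
  intros Hc hx hxy hyz.
  set (t := (z - y) / (z - x)).
  assert (ht0 : 0 < t) by (unfold t; apply Rdiv_lt_0_compat; lra).
  assert (E1 : t * (z - x) = z - y) by (unfold t; field; lra).
  assert (ht1 : t < 1) by nra.
  assert (Ey : t * x + (1 - t) * z = y) by nra.
  pose proof (Hc x z t ltac:(unfold Ipos; lra) ltac:(unfold Ipos; lra) ltac:(lra) ht0 ht1) as H.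
  rewrite Ey in H.
  apply Rmult_lt_compat_r with (r := z - x) in H; [|lra].
  assert (E2 : (1 - t) * (z - x) = y - x) by nra.
  replace ((t * eta x + (1 - t) * eta z) * (z - x)) with
    (eta x * (t * (z - x)) + eta z * ((1 - t) * (z - x))) in H by ring.
  rewrite E1, E2 in H. nra.
Qed.

Lemma key gamma beta eta etap t s : strictly_convex_on Ipos eta ->
  deriv_within Ipos eta beta (etap beta) -> 0 < gamma -> gamma * etap beta = 1 ->
  0 <= t -> t <= s -> s <= beta -> gamma * (eta s - eta t) <= s - t.
Proof.
  intros Hc Hd hg hgb ht hts hsb.
  destruct (Req_dec t s) as [E|Nts]; [subst; lra|].
  assert (Hk : forall k, 0 < k -> (eta s - eta t) * k <= (eta (beta + k) - eta beta) * (s - t)).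
  { intros k hk. destruct (Req_dec s beta) as [Es|Ns].
    - subst s. pose proof (three eta t beta (beta + k) Hc ht ltac:(lra) ltac:(lra)).
      replace (beta + k - beta) with k in H by ring. lra.
    - pose proof (three eta t s beta Hc ht ltac:(lra) ltac:(lra)) as H1.
      pose proof (three eta s beta (beta + k) Hc ltac:(lra) ltac:(lra) ltac:(lra)) as H2.
      replace (beta + k - beta) with k in H2 by ring.
      apply Rmult_le_compat_r with (r := k) in H1; [|lra].
      apply Rmult_le_compat_r with (r := s - t) in H2; [|lra].
      assert (H3 : (eta s - eta t) * k * (beta - s) <= (eta (beta + k) - eta beta) * (s - t) * (beta - s)) by nra.
      apply Rmult_le_reg_r in H3; lra. }
  assert (A : eta s - eta t <= etap beta * (s - t)).
  { destruct (Rle_dec (eta s - eta t) (etap beta * (s - t))) as [|N]; [auto|exfalso].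
    set (e := (eta s - eta t - etap beta * (s - t)) / (2 * (s - t))).
    assert (he : 0 < e) by (unfold e; apply Rdiv_lt_0_compat; lra).
    destruct (Hd e he) as [d [hd H]].
    specialize (Hk (d/2) ltac:(lra)).
    specialize (H (beta + d/2) ltac:(unfold Ipos; lra)).
    replace (beta + d / 2 - beta) with (d/2) in H by ring.
    rewrite Rabs_pos_eq in H by lra.
    specialize (H ltac:(lra)). apply abs_le in H.
    assert (E : e * (2 * (s - t)) = eta s - eta t - etap beta * (s - t)) by (unfold e; field; lra).
    assert (H4 : (eta (beta + d / 2) - eta beta) * (s - t) <= (etap beta * (d/2) + e * (d/2)) * (s - t)) by nra.
    nra. }
  nra.
Qed.

Lemma Ff_mono gamma beta eta etap x y : strictly_convex_on Ipos eta ->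
  deriv_within Ipos eta beta (etap beta) -> 0 < gamma -> gamma * etap beta = 1 ->
  0 <= beta -> 0 <= x -> x <= y -> Ff gamma beta eta y - Ff gamma beta eta x <= y - x.
Proof.
  intros Hc Hd hg hgb hb hx hxy. unfold Ff, bstar.
  assert (Hm : 0 <= Rmin beta x <= Rmin beta y /\ Rmin beta y <= beta /\
     Rmin beta y - Rmin beta x <= y - x)
    by (unfold Rmin; repeat destruct Rle_dec; lra).
  pose proof (key gamma beta eta etap (Rmin beta x) (Rmin beta y) Hc Hd hg hgb
    ltac:(lra) ltac:(lra) ltac:(lra)). lra.
Qed.

Lemma deriv_nonneg f fp : strictly_increasing_on I01 f ->
  (forall a, I01 a -> deriv_within I01 f a (fp a)) -> forall a, I01 a -> 0 <= fp a.
Proof.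
  intros Hi Hd a ha. destruct (Rle_dec 0 (fp a)) as [|N]; [auto|exfalso].
  destruct (Hd a ha (- fp a / 2)) as [d [hd H]]; [lra|].
  destruct ha as [ha0 ha1].
  set (k := Rmin d (1 - a) / 2).
  assert (hk : 0 < k /\ k < d /\ k < 1 - a).
  { unfold k; pose proof (Rmin_l d (1-a)); pose proof (Rmin_r d (1-a));
    pose proof (Rmin_pos d (1-a) hd ltac:(lra)); lra. }
  specialize (H (a + k) ltac:(unfold I01; lra)).
  replace (a + k - a) with k in H by ring. rewrite Rabs_pos_eq in H by lra.
  specialize (H ltac:(lra)). apply abs_le in H.
  pose proof (Hi a (a + k) ltac:(unfold I01; lra) ltac:(unfold I01; lra) ltac:(lra)).
  nra.
Qed.

Lemma gfun_eq P yH yL u gamma beta C Cp eta a :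
  gfun P yH yL u gamma beta C Cp eta a =
  P * yL - Ff gamma beta eta (wL u C Cp a)
  + a * (P * yH - P * yL - Ff gamma beta eta (wH u C Cp a) + Ff gamma beta eta (wL u C Cp a)).
Proof. unfold gfun, Ff. cbv zeta. ring. Qed.

Theorem proposition4
  (P yH yL u gamma beta : R) (C Cp Cpp eta etap etapp : R -> R) :
  0 < P -> 0 <= yL -> yL < yH -> 0 < gamma -> gamma <= 1 ->
  C 0 = 0 ->
  strictly_increasing_on I01 C ->
  strictly_convex_on I01 C ->
  (forall a, I01 a -> deriv_within I01 C a (Cp a)) ->
  (forall a, I01 a -> deriv_within I01 Cp a (Cpp a)) ->
  tends_to_infty_at_1 C ->
  eta 0 = 0 ->
  strictly_increasing_on Ipos eta ->
  strictly_convex_on Ipos eta ->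
  (forall x, Ipos x -> deriv_within Ipos eta x (etap x)) ->
  (forall x, Ipos x -> deriv_within Ipos etap x (etapp x)) ->
  0 <= beta -> gamma * etap beta = 1 ->
  exists D, right_deriv (gfun P yH yL u gamma beta C Cp eta) 0 D /\
    (Cp 0 < P * yH - P * yL ->
       0 < D /\
       (forall astar, I01 astar ->
          (forall a, I01 a -> gfun P yH yL u gamma beta C Cp eta a
                              <= gfun P yH yL u gamma beta C Cp eta astar) ->
          0 < astar)) /\
    (0 <= beta -> beta <= u -> 0 < D -> Cp 0 < P * yH - P * yL).
Proof.
  intros hP hyL hy hg hg1 hC0 HCi HCc HCd HCpd HCinf he0 Hei Hec Hed Hepd hb hgb.
  set (F := Ff gamma beta eta).
  set (wl := wL u C Cp). set (wh := wH u C Cp).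
  set (g := gfun P yH yL u gamma beta C Cp eta).
  set (D := P * yH - P * yL - F (wh 0) + F (wl 0)).
  assert (I0 : I01 0) by (unfold I01; lra).
  assert (HCp : forall a, I01 a -> 0 <= Cp a) by (apply deriv_nonneg with C; auto).
  assert (Hwl0 : forall h, 0 <= wl h) by (intros; unfold wl, wL; apply Rmax_l).
  assert (Hwh0 : forall h, 0 < h -> h < 1 -> 0 <= wh h).
  { intros h h0 h1; unfold wh, wH; fold (wl h);
    pose proof (Hwl0 h); pose proof (HCp h ltac:(unfold I01; lra)); lra. }
  assert (HsoC := deriv_so _ _ (HCd 0 I0)).
  assert (HtCp := deriv_t0 _ _ (HCpd 0 I0)).
  assert (Hsowl : so (fun h => wl h - wl 0)).
  { eapply so_le.
    - apply (so_plus _ _ (so_opp _ (so_mul_t0 _ HtCp)) HsoC).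
    - intros h hp. unfold wl, wL.
      eapply Rle_trans; [apply rmax_lip|]. right. f_equal. ring. }
  assert (Htwl := so_t0 _ Hsowl).
  assert (Htwh : t0 (fun h => wh h - wh 0)).
  { eapply t0_ext; [| apply (t0_plus _ _ Htwl HtCp)].
    intros h; simpl; unfold wh, wH; fold (wl h); fold (wl 0); ring. }
  assert (Hwh00 : 0 <= wh 0).
  { unfold wh, wH; fold (wl 0); pose proof (Hwl0 0); pose proof (HCp 0 I0); lra. }
  assert (LL := Ff_lip gamma beta eta etap (wl 0) hb hg Hed (Hwl0 0)).
  assert (LH := Ff_lip gamma beta eta etap (wh 0) hb hg Hed Hwh00).
  assert (Hso : so (fun h => g h - g 0 - D * h)).
  { assert (A := comp_t0 _ _ _ LH Hwh0 Htwh).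
    assert (B := comp_t0 _ _ _ LL ltac:(intros; apply Hwl0) Htwl).
    assert (Cs := comp_so _ _ _ LL ltac:(intros; apply Hwl0) Htwl Hsowl).
    eapply so_ext; [| apply (so_plus _ _ (so_mul_t0 _ (t0_plus _ _ B (t0_opp _ A))) (so_opp _ Cs))].
    intros h; simpl. unfold g, D, F; rewrite !gfun_eq. fold wl wh. ring. }
  exists D. split; [apply so_rd; exact Hso|].
  assert (HFm := fun x y => Ff_mono gamma beta eta etap x y Hec (Hed beta hb) hg hgb hb).
  assert (Ewh : wh 0 = wl 0 + Cp 0) by reflexivity.
  split.
  - intros Hlt.
    assert (hD : 0 < D).
    { pose proof (HFm (wl 0) (wh 0) (Hwl0 0) ltac:(pose proof (HCp 0 I0); lra)).
      unfold D, F. lra. }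
    split; auto.
    intros a [ha0 ha1] Hmax. destruct (Req_dec a 0) as [E|N]; [|lra]. subst a.
    exfalso. destruct (so_rd _ _ Hso (D/2) ltac:(lra)) as [d [hd H]].
    set (k := Rmin d 1 / 2).
    assert (hk : 0 < k /\ k < d /\ k < 1).
    { unfold k; pose proof (Rmin_l d 1); pose proof (Rmin_r d 1);
      pose proof (Rmin_pos d 1 hd ltac:(lra)); lra. }
    specialize (H k ltac:(lra) ltac:(lra)). apply abs_le in H.
    replace (0 + k) with k in H by ring.
    specialize (Hmax k ltac:(unfold I01; lra)). fold g in Hmax.
    assert (H2 : D / 2 <= (g k - g 0) / k) by lra.
    apply Rmult_le_compat_r with (r := k) in H2; [|lra].
    replace ((g k - g 0) / k * k) with (g k - g 0) in H2 by (field; lra).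
    nra.
  - intros _ hbu hD.
    assert (Ewl : wl 0 = u).
    { unfold wl, wL. rewrite hC0. replace (u - 0 * Cp 0 + 0) with u by ring.
      unfold Rmax; destruct Rle_dec; lra. }
    assert (Ef : forall w, beta <= w -> F w = w - beta + gamma * eta beta).
    { intros w hw. unfold F, Ff, bstar. rewrite Rmin_left by lra. reflexivity. }
    pose proof (HCp 0 I0).
    unfold D in hD. rewrite (Ef (wh 0)), (Ef (wl 0)) in hD by lra. lra.
Qed.
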